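(* Let $\alpha,\beta\in\Bbbk^*$ be not roots of unity and $r,i\in\mathbb{Z}$ with $\alpha^w=\beta^n$. Then the Nichols algebra $\mathcal{B}(V(\alpha,\beta,x^rg^i))$ of the Yetter-Drinfeld module $V(\alpha,\beta,x^rg^i)$ over $B(n,w,\gamma)$ is infinite-dimensional.
   Context: $\Bbbk$ is an algebraically closed field of characteristic $0$; $n,w$ positive integers, $\gamma$ a primitive $n$-th root of unity. $H=B(n,w,\gamma)$ is the Hopf algebra generated by $x^{\pm1},g,y$ with relations $xx^{-1}=x^{-1}x=1$, $xg=gx$, $xy=yx$, $yg=\gamma gy$, $y^n=1-x^w=1-g^n$, with $\Delta(x)=x\otimes x$, $\Delta(g)=g\otimes g$, $\Delta(y)=y\otimes g+1\otimes y$, $\varepsilon(x)=\varepsilon(g)=1$, $\varepsilon(y)=0$, $S(x)=x^{-1}$, $S(g)=g^{-1}$, $S(y)=-yg^{-1}$. Yetter-Drinfeld modules are left-left: $\delta(h\cdot v)=h_{(1)}v_{(-1)}S(h_{(3)})\otimes h_{(2)}\cdot v_{(0)}$. The Nichols algebra of a Yetter-Drinfeld module $U$ is $\mathcal{B}(U)=T(U)/\bigoplus_{k\ge2}\ker(\mathfrak{S}_k)$, where $\mathfrak{S}_k$ is the braided symmetrizer on $U^{\otimes k}$ for the braiding $c(u\otimes u')=u_{(-1)}\cdot u'\otimes u_{(0)}$. Define $c_\beta^{r,i}(k,l)\in H$ ($0\le l\le k$) by $c_\beta^{r,i}(0,0)=x^rg^i$ and, for $k\ge0$: $c_\beta^{r,i}(k+1,0)=c_\beta^{r,i}(k,0)S(y)+\beta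 yc_\beta^{r,i}(k,0)S(g)$; for $0<l<k+1$, $c_\beta^{r,i}(k+1,l)=c_\beta^{r,i}(k,l)S(y)+\beta\gamma^{-l}yc_\beta^{r,i}(k,l)S(g)+c_\beta^{r,i}(k,l-1)S(g)$; $c_\beta^{r,i}(k+1,k+1)=c_\beta^{r,i}(k,k)S(g)$. When $\beta^n\ne1$ (as here), $V(\alpha,\beta,x^rg^i)$ is the Yetter-Drinfeld module over $H$ with basis $v_0,\dots,v_{n-1}$ and $x\cdot v_k=\alpha v_k$, $g\cdot v_k=\beta\gamma^{-k}v_k$, $y\cdot v_k=v_{k+1}$ ($k<n-1$), $y\cdot v_{n-1}=(1-\beta^n)v_0$, $\delta(v_k)=\sum_{l=0}^kc_\beta^{r,i}(k,l)\otimes v_l$. *)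

(* Defs.v *)
From HB Require Import structures.
From mathcomp Require Import all_boot all_order all_algebra.
Set Implicit Arguments. Unset Strict Implicit. Unset Printing Implicit Defensive.
Import GRing.Theory Num.Theory.
Local Open Scope ring_scope.

(* The Yetter-Drinfeld module V(alpha,beta,x^r g^i) over H = B(n,w,gamma),
   with basis v_0,...,v_(n-1).  Everything the Nichols algebra depends on is
   the braiding c(u (x) u') = u_(-1).u' (x) u_(0); this only involves the
   action of the elements c_beta^{r,i}(k,l) of H on V, i.e. their images
   under the representation rho : H -> End(V).  Since rho is an algebra map,
   rho(c(k,l)) satisfies the same recursion as c(k,l), with
   rho(x^r g^i), rho(y), rho(S y) = -rho(y) rho(g)^-1, rho(S g) = rho(g)^-1.

   Endomorphisms of V are encoded as coefficient functions
   A m b = coefficient of v_m in A v_b  (indices m, b < n). *)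

Section YDModule.
Variables (K : fieldType) (n : nat) (gam alpha beta : K) (r i : int).

Definition vmat := nat -> nat -> K.
Definition vzero : vmat := fun _ _ => 0.
Definition vadd (A B : vmat) : vmat := fun m b => A m b + B m b.
Definition vscale (c : K) (A : vmat) : vmat := fun m b => c * A m b.
Definition vmul (A B : vmat) : vmat := fun m b => \sum_(j < n) A m j * B j b.

Definition rhoG : vmat := fun m b => (m == b)%:R * (beta / gam ^+ b).
Definition rhoY : vmat := fun m b =>
  if (b.+1 < n)%N then (m == b.+1)%:R
  else if (b == n.-1) && (m == 0%N) then 1 - beta ^+ n else 0.
Definition rhoSG : vmat := fun m b => (m == b)%:R * (gam ^+ b / beta).
Definition rhoSY : vmat := vscale (-1) (vmul rhoY rhoSG).
(* x^r g^i, with x . v_k = alpha v_k *)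
Definition rhoxg : vmat :=
  fun m b => (m == b)%:R * (alpha ^ r * (beta / gam ^+ b) ^ i).

(* rho(c_beta^{r,i}(k,l)); it is 0 for l > k (c(k,l) is only defined for
   l <= k, and the recursion below then reproduces exactly the three cases
   of the paper). *)
Fixpoint cmat (k : nat) : nat -> vmat :=
  match k with
  | 0%N => fun l => if l == 0%N then rhoxg else vzero
  | k'.+1 => fun l =>
      vadd (vmul (cmat k' l) rhoSY)
        (vadd (vscale (beta / gam ^+ l) (vmul rhoY (vmul (cmat k' l) rhoSG)))
              (if l is l'.+1 then vmul (cmat k' l') rhoSG else vzero))
  end.

(* delta(v_a) = sum_(l<=a) c(a,l) (x) v_l, hence
   c(v_a (x) v_b) = sum_l rho(c(a,l)) v_b (x) v_l;
   braid m l a b = coefficient of v_m (x) v_l in c(v_a (x) v_b). *)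
Definition braid (m l a b : nat) : K := cmat a l m b.

Definition tens (k : nat) := (k.-tuple 'I_n)%type.
Definition tcoord k (t : tens k) (j : nat) : nat := nth 0%N [seq val x | x <- t] j.

(* Endomorphisms of V^(x)k: A s t = coefficient of e_s in A e_t. *)
Definition top (k : nat) := tens k -> tens k -> K.
Definition tid k : top k := fun s t => (s == t)%:R.
Definition tadd k (A B : top k) : top k := fun s t => A s t + B s t.
Definition tmul k (A B : top k) : top k := fun s t => \sum_(u : tens k) A s u * B u t.

(* c_j = id^(x)j (x) c (x) id^(x)(k-j-2), acting on factors j, j+1
   (0-based), defined for j+1 < k. *)
Definition tbraid k (j : nat) : top k := fun s t =>
  if (j.+1 < k)%N then
    if [forall p : 'I_k, ((p : nat) != j) && ((p : nat) != j.+1) ==> (tnth s p == tnth t p)]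
    then braid (tcoord s j) (tcoord s j.+1) (tcoord t j) (tcoord t j.+1)
    else 0
  else 0.

(* chain k j = c_(k-2) c_(k-3) ... c_(k-1-j) (0-based), i.e.
   c_(k-1) ... c_(k-j) in 1-based numbering. *)
Fixpoint chain k (j : nat) : top k :=
  match j with
  | 0%N => @tid k
  | j'.+1 => tmul (@chain k j') (@tbraid k (k - 2 - j'))
  end.

(* T_k = id + c_(k-1) + c_(k-1)c_(k-2) + ... + c_(k-1)...c_1 (1-based) *)
Definition Tk k : top k := fun s t => \sum_(j < k) @chain k j s t.

(* A (x) id : V^(x)k -> V^(x)k, extended to V^(x)(k+1) *)
Definition tinit k (t : tens k.+1) : tens k :=
  [tuple tnth t (widen_ord (leqnSn k) p) | p < k].
Definition lift_left k (A : top k) : top k.+1 := fun s t =>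
  A (tinit s) (tinit t) * (tnth s ord_max == tnth t ord_max)%:R.

(* Braided symmetrizer: S_0 = id, S_(k+1) = (S_k (x) id) T_(k+1);
   this equals sum_(sigma in S_k) M(sigma), M the Matsumoto section. *)
Fixpoint sym (k : nat) : top k :=
  match k return top k with
  | 0%N => @tid 0
  | k'.+1 => tmul (lift_left (@sym k')) (@Tk k'.+1)
  end.

Definition sym_mx k : 'M[K]_#|{: tens k}| :=
  \matrix_(a, b) @sym k (enum_val a) (enum_val b).

(* dim B^k(V) = dim V^(x)k / ker S_k = rank S_k *)
Definition nichols_deg_dim (k : nat) : nat := \rank (sym_mx k).

(* B(V) = (+)_k V^(x)k / ker S_k is infinite-dimensional: the total
   dimension is unbounded. *)
Definition nichols_infinite_dim : Prop :=
  forall N : nat, exists D : nat, (N <= \sum_(k < D) nichols_deg_dim k)%N.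

End YDModule.

(* Main.v *)
Require Import Defs.
From HB Require Import structures.
From mathcomp Require Import all_boot all_order all_algebra.
From mathcomp Require Import zify ring.
Set Implicit Arguments. Unset Strict Implicit.
Import GRing.Theory Num.Theory.
Local Open Scope ring_scope.

Section Aux.
Variables (K : fieldType) (n : nat) (gam alpha beta : K) (r i : int).

Lemma sum_neq0 (I : finType) (F : I -> K) : \sum_(x : I) F x != 0 -> exists x, F x != 0.
Proof.
move=> h; case: (pickP (fun x => F x != 0)) => [j hj|h0]; first by exists j.
by move: h; rewrite big1 ?eqxx // => j _; move/negbFE: (h0 j) => /eqP.
Qed.

Lemma mul_neq0 (x y : K) : x * y != 0 -> x != 0 /\ y != 0.
Proof. by rewrite mulf_eq0 negb_or => /andP. Qed.

Lemma add_neq0 (x y : K) : x + y != 0 -> x != 0 \/ y != 0.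
Proof.
case: (eqVneq x 0) => [->|hx]; last by left.
by rewrite add0r; right.
Qed.

Lemma natr_neq0 (b : bool) : (b%:R : K) != 0 -> b.
Proof. by case: b => //=; rewrite eqxx. Qed.

Lemma rhoY_supp m j : rhoY n beta m j != 0 -> (m <= j.+1)%N.
Proof.
rewrite /rhoY; case: ifP => _.
  by move/natr_neq0 => /eqP ->.
case: ifP => [/andP [_ /eqP ->] //|]; by rewrite eqxx.
Qed.

Lemma rhoSG_supp j b : rhoSG gam beta j b != 0 -> j = b.
Proof. by rewrite /rhoSG => /mul_neq0 [/natr_neq0 /eqP]. Qed.

Lemma rhoSY_supp j b : rhoSY n gam beta j b != 0 -> (j <= b.+1)%N.
Proof.
rewrite /rhoSY /vscale => /mul_neq0 [_] /sum_neq0 [x /mul_neq0 [h1 h2]].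
by move: (rhoSG_supp h2) h1 => <- /rhoY_supp.
Qed.

Notation cm := (cmat n gam alpha beta r i).

Lemma cmat_supp k l m b : cm k l m b != 0 -> ((m + l <= k + b) && (l <= k))%N.
Proof.
elim: k l m b => [|k IH] l m b /=.
  case: ifP => [/eqP -> |]; last by rewrite /vzero eqxx.
  by rewrite /rhoxg /= => /mul_neq0 [/natr_neq0 /eqP -> _]; apply/andP; split; lia.
rewrite /vadd => /add_neq0 [|/add_neq0 [|]].
- rewrite /vmul => /sum_neq0 [j /mul_neq0 [/IH /andP [h1 h2] /rhoSY_supp h3]].
  apply/andP; split; lia.
- rewrite /vscale /vmul => /mul_neq0 [_] /sum_neq0 [j /mul_neq0 [/rhoY_supp h1]].
  move=> /sum_neq0 [x /mul_neq0 [/IH /andP [h2 h3] /rhoSG_supp h4]].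
  apply/andP; split; lia.
- case: l => [|l]; first by rewrite /vzero eqxx.
  rewrite /vmul => /sum_neq0 [j /mul_neq0 [/IH /andP [h1 h2] /rhoSG_supp h3]].
  apply/andP; split; lia.
Qed.

Lemma vmul_SG (A : vmat K) m b : (b < n)%N ->
  vmul n A (rhoSG gam beta) m b = A m b * (gam ^+ b / beta).
Proof.
move=> hb; rewrite /vmul (bigD1 (Ordinal hb)) //= big1 ?addr0.
  by rewrite /rhoSG eqxx mul1r.
move=> j hj; rewrite /rhoSG; case: eqP => [hjb|]; last by rewrite mul0r mulr0.
by case/eqP: hj; apply: val_inj.
Qed.

Lemma cmat_diag k m b : (b < n)%N ->
  cm k k m b = (m == b)%:R * (alpha ^ r * (beta / gam ^+ b) ^ i) * (gam ^+ b / beta) ^+ k.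
Proof.
move=> hb; elim: k m => [|k IH] m /=; first by rewrite expr0 mulr1.
have z : forall m' b', cm k k.+1 m' b' = 0.
  move=> m' b'; apply/eqP; apply/negPn/negP => /cmat_supp /andP [_]; lia.
have e1 : vmul n (cm k k.+1) (rhoSY n gam beta) m b = 0.
  by rewrite /vmul big1 // => j _; rewrite z mul0r.
have e2 : vmul n (rhoY n beta) (vmul n (cm k k.+1) (rhoSG gam beta)) m b = 0.
  rewrite /vmul big1 // => j _; rewrite [X in _ * X]big1 ?mulr0 // => x _.
  by rewrite z mul0r.
rewrite /vadd /vscale e1 e2 mulr0 !add0r vmul_SG // IH exprS.
by rewrite [_ * (_ ^+ k)]mulrC !mulrA.
Qed.


Definition tsum k (t : tens n k) : nat := (\sum_(p < k) val (tnth t p))%N.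
Definition mono k (A : top K n k) := forall s t, A s t != 0 -> (tsum s <= tsum t)%N.
Definition ext k (t : tens n k) := forall u, tsum u = tsum t -> u = t.

Lemma tcoordE k (t : tens n k) (p : 'I_k) : tcoord t p = tnth t p.
Proof. by rewrite /tcoord (nth_map (tnth t p)) ?size_tuple // -tnth_nth. Qed.

Lemma mono_tmul k (A B : top K n k) : mono A -> mono B -> mono (tmul A B).
Proof.
move=> hA hB s t /sum_neq0 [u /mul_neq0 [/hA h1 /hB h2]].
exact: leq_trans h1 h2.
Qed.

Lemma mono_tid k : mono (@tid K n k).
Proof. by move=> s t /natr_neq0 /eqP ->. Qed.

Lemma tsum_split k (s : tens n k) j (hj : (j.+1 < k)%N) :
  tsum s = (tcoord s j + tcoord s j.+1 +
    \sum_(p < k | ((p : nat) != j) && ((p : nat) != j.+1)) val (tnth s p))%N.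
Proof.
pose pj : 'I_k := Ordinal (ltnW hj); pose pj1 : 'I_k := Ordinal hj.
rewrite /tsum (bigD1 pj) //= (bigD1 pj1) /=; last by rewrite -val_eqE /= (gtn_eqF (ltnSn j)).
rewrite (tcoordE s pj) (tcoordE s pj1) addnA; congr (_ + _)%N;
  by apply: eq_bigl => p; rewrite -!val_eqE /= andbC.
Qed.

Lemma mono_tbraid k j : mono (tbraid (n:=n) gam alpha beta r i (k:=k) j).
Proof.
move=> s t; rewrite /tbraid; case: ifP => hj; last by rewrite eqxx.
case: ifP => hf; last by rewrite eqxx.
rewrite /braid => /cmat_supp /andP [h _].
rewrite (tsum_split s hj) (tsum_split t hj).
have -> : (\sum_(p < k | ((p : nat) != j) && ((p : nat) != j.+1)) val (tnth s p) =
          \sum_(p < k | ((p : nat) != j) && ((p : nat) != j.+1)) val (tnth t p))%N.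
  apply: eq_bigr => p hp; move/forallP: hf => /(_ p) /implyP /(_ hp) /eqP -> //.
by rewrite leq_add2r.
Qed.

Lemma mono_chain k j : mono (chain (n:=n) gam alpha beta r i (k:=k) j).
Proof. elim: j => [|j IH] /=; [exact: mono_tid | apply: mono_tmul IH _; exact: mono_tbraid]. Qed.

Lemma mono_Tk k : mono (Tk (n:=n) gam alpha beta r i (k:=k)).
Proof. by move=> s t /sum_neq0 [j /mono_chain]. Qed.

Lemma tsum_init k (s : tens n k.+1) : tsum s = (tsum (tinit s) + tnth s ord_max)%N.
Proof.
rewrite /tsum big_ord_recr /=; congr (_ + _)%N.
by apply: eq_bigr => p _; rewrite tnth_mktuple.
Qed.

Lemma mono_lift k (A : top K n k) : mono A -> mono (lift_left A).
Proof.
move=> hA s t; rewrite /lift_left => /mul_neq0 [/hA h /natr_neq0 /eqP e].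
by rewrite (tsum_init s) (tsum_init t) e leq_add2r.
Qed.

Lemma mono_sym k : mono (sym (n:=n) gam alpha beta r i (k:=k)).
Proof.
elim: k => [|k IH] /=; first exact: mono_tid.
apply: mono_tmul (mono_lift IH) _; exact: mono_Tk.
Qed.

Lemma tmul_diag k (A B : top K n k) t : mono A -> mono B -> ext t ->
  tmul A B t t = A t t * B t t.
Proof.
move=> hA hB he; rewrite /tmul (bigD1 t) //= big1 ?addr0 // => u hu.
case: (eqVneq (A t u) 0) => [->|h1]; first by rewrite mul0r.
case: (eqVneq (B u t) 0) => [->|h2]; first by rewrite mulr0.
move: hu; rewrite (he u) ?eqxx //; apply/eqP; rewrite eqn_leq.
by rewrite (hA _ _ h1) (hB _ _ h2).
Qed.

Definition ct k (c : 'I_n) : tens n k := [tuple c | _ < k].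

Lemma tinit_ct k c : tinit (ct k.+1 c) = ct k c.
Proof. by apply: eq_from_tnth => p; rewrite !tnth_mktuple. Qed.

Lemma tcoord_ct k c j : (j < k)%N -> tcoord (ct k c) j = c.
Proof. by move=> hj; rewrite (tcoordE _ (Ordinal hj)) tnth_mktuple. Qed.

Lemma leq_tsum k (u : tens n k) p : (val (tnth u p) <= tsum u)%N.
Proof. by rewrite /tsum (bigD1 p) //= leq_addr. Qed.

Lemma ext_ct0 k c : val c = 0%N -> ext (ct k c).
Proof.
move=> c0 u hu; apply: eq_from_tnth => p; rewrite tnth_mktuple; apply: val_inj.
rewrite c0; have : tsum (ct k c) = 0%N.
  by rewrite /tsum big1 // => q _; rewrite tnth_mktuple.
move=> h; have := leq_tsum u p; rewrite hu h; lia.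
Qed.

Lemma ext_ctmax k c : val c = n.-1 -> ext (ct k c).
Proof.
move=> cm1 u hu; apply: eq_from_tnth => p; rewrite tnth_mktuple; apply: val_inj.
rewrite cm1; apply/eqP; apply/negPn/negP => hne.
have e : forall x : 'I_n, val x = nat_of_ord x by [].
have hlt : (val (tnth u p) < n.-1)%N.
  by have := ltn_ord (tnth u p); rewrite e in hne *; lia.
have : (tsum u < tsum (ct k c))%N.
  rewrite /tsum (bigD1 p) //= [X in (_ < X)%N](bigD1 p) //= tnth_mktuple cm1 -addSn.
  apply: leq_add => //; apply: leq_sum => q _; rewrite tnth_mktuple cm1.
  by have := ltn_ord (tnth u q); lia.
by rewrite hu ltnn.
Qed.

Section Diag.
Variable c : 'I_n.
Hypothesis hext : forall k, ext (ct k c).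
Let q := braid n gam alpha beta r i c c c c.

Lemma chain_diag k j : (j < k)%N ->
  chain (n:=n) gam alpha beta r i (k:=k) j (ct k c) (ct k c) = q ^+ j.
Proof.
elim: j => [|j IH] hj /=; first by rewrite /tid eqxx.
rewrite tmul_diag //; [|exact: mono_chain|exact: mono_tbraid].
rewrite IH ?(ltnW hj) // exprSr; congr (_ * _).
rewrite /tbraid ifT; last lia.
rewrite ifT; last by apply/forallP => p; apply/implyP => _; rewrite !tnth_mktuple.
by rewrite !tcoord_ct //; lia.
Qed.

Lemma sym_diag k : sym (n:=n) gam alpha beta r i (k:=k) (ct k c) (ct k c) =
  \prod_(j < k) (\sum_(l < j.+1) q ^+ l).
Proof.
elim: k => [|k IH] /=; first by rewrite big_ord0 /tid eqxx.
rewrite tmul_diag //; [|apply: mono_lift; exact: mono_sym|exact: mono_Tk].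
rewrite big_ord_recr /=; congr (_ * _).
  by rewrite /lift_left tinit_ct IH !tnth_mktuple eqxx mulr1.
by rewrite /Tk; apply: eq_bigr => j _; rewrite chain_diag.
Qed.

End Diag.

End Aux.

Lemma alpha_pow_ne1 (K : fieldType) (a : K) (e : int) :
  a != 0 -> (forall m : nat, (0 < m)%N -> a ^+ m != 1) -> e != 0 -> a ^ e != 1.
Proof.
move=> a0 ha; case: e => N /=.
  move=> hN; have hN' : (0 < N)%N by case: N hN.
  by rewrite -exprnP; apply: ha.
move=> _; rewrite /exprz invr_eq1; exact: ha.
Qed.

Lemma good_q (K : fieldType) (q : K) : [pchar K] =i pred0 ->
  (q = 1 \/ forall m : nat, (0 < m)%N -> q ^+ m != 1) ->
  forall j : nat, \sum_(l < j.+1) q ^+ l != 0.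
Proof.
move=> hc [->|hq] j.
  under eq_bigr do rewrite expr1n.
  by rewrite sumr_const card_ord; move/pcharf0P: hc => ->.
apply/negP => /eqP h; have := subrX1 q j.+1; rewrite h mulr0 => /eqP.
by rewrite subr_eq0; apply/negP; apply: hq.
Qed.

Lemma q_good (K : fieldType) (q a : K) (n : nat) (e : int) : a != 0 ->
  (forall m : nat, (0 < m)%N -> a ^+ m != 1) -> (0 < n)%N -> e != 0 ->
  q ^+ n = a ^ e -> forall m : nat, (0 < m)%N -> q ^+ m != 1.
Proof.
move=> a0 ha n0 e0 hq m m0; apply/negP => /eqP h.
have : (q ^+ n) ^+ m = 1 by rewrite exprAC h expr1n.
rewrite hq exprnP exprz_exp => /eqP; apply/negP; apply: alpha_pow_ne1 => //.
by rewrite mulf_neq0 // eqz_nat -lt0n.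
Qed.

Lemma sym_nonzero (K : fieldType) n (gam alpha beta : K) r i k (c : 'I_n) :
  (forall k, ext (ct k c)) ->
  (forall j : nat, \sum_(l < j.+1) (braid n gam alpha beta r i c c c c) ^+ l != 0) ->
  (0 < @nichols_deg_dim K n gam alpha beta r i k)%N.
Proof.
move=> he hq; rewrite lt0n /nichols_deg_dim mxrank_eq0; apply/negP => /eqP h0.
move/matrixP: h0 => /(_ (enum_rank (ct k c)) (enum_rank (ct k c))).
rewrite /sym_mx !mxE enum_rankK (sym_diag _ _ _ _ _ he) => /eqP.
by apply/negP; rewrite prodf_seq_neq0; apply/allP => j _; apply/implyP => _; apply: hq.
Qed.

Theorem lemma5p9 (K : closedFieldType) (n w : nat) (gam alpha beta : K) (r i : int) :
  [pchar K] =i pred0 ->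
  (0 < n)%N -> (0 < w)%N ->
  n.-primitive_root gam ->
  alpha != 0 -> beta != 0 ->
  (forall m : nat, (0 < m)%N -> alpha ^+ m != 1) ->
  (forall m : nat, (0 < m)%N -> beta ^+ m != 1) ->
  alpha ^+ w = beta ^+ n ->
  nichols_infinite_dim n gam alpha beta r i.
Proof.
move=> hc n0 w0 prim a0 b0 ha hb haw.
have g1 : gam ^+ n = 1 := prim_expr_order prim.
have g0 : gam != 0.
  by apply/eqP => g; move: g1; rewrite g expr0n gtn_eqF // => /eqP; rewrite eq_sym oner_eq0.
pose e0 : int := r * n%:Z + w%:Z * i.
pose e1 : int := r * n%:Z + w%:Z * i + (- w%:Z) * (n.-1)%:Z.
have E1 : (alpha ^ r) ^+ n = alpha ^ (r * n%:Z) by rewrite exprnP exprz_exp.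
have E2 : forall u : K, u ^+ n = alpha ^+ w -> (u ^ i) ^+ n = alpha ^ (w%:Z * i).
  move=> u hu; by rewrite exprnP exprzAC -exprnP hu exprnP exprz_exp.
have q0E : (braid n gam alpha beta r i 0 0 0 0) ^+ n = alpha ^ e0.
  rewrite /braid /= /rhoxg /= mul1r expr0 divr1 exprMn E1 E2 -?expfzDr //.
have q1E : (braid n gam alpha beta r i n.-1 n.-1 n.-1 n.-1) ^+ n = alpha ^ e1.
  rewrite /braid cmat_diag ?ltn_predL // eqxx mul1r.
  have -> : gam ^+ n.-1 / beta = (beta / gam ^+ n.-1)^-1 by rewrite invf_div.
  set u := beta / gam ^+ n.-1.
  have hu : u ^+ n = alpha ^+ w.
    by rewrite /u expr_div_n exprAC g1 expr1n divr1 haw.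
  rewrite !exprMn E1 E2 // exprAC exprVn hu exprnP exprnN exprz_exp.
  by rewrite -!expfzDr.
have good0 : (forall k, ext (ct k (Ordinal n0))) by move=> k; apply: ext_ct0.
have hm : (n.-1 < n)%N by rewrite ltn_predL.
have goodm : (forall k, ext (ct k (Ordinal hm))).
  by move=> k; apply: ext_ctmax.
suff [c [hext hq]] : exists c : 'I_n, (forall k, ext (ct k c)) /\
    (forall j : nat, \sum_(l < j.+1) (braid n gam alpha beta r i c c c c) ^+ l != 0).
  move=> N; exists N; apply: (@leq_trans (\sum_(k < N) 1)%N).
    by rewrite sum_nat_const card_ord muln1.
  by apply: leq_sum => k _; exact: (@sym_nonzero K n gam alpha beta r i k c hext hq).
case: (eqVneq e0 0) => he0; last first.
  exists (Ordinal n0); split => //; apply: good_q => //; right.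
  exact: q_good q0E.
case: (eqVneq e1 0) => he1; last first.
  exists (Ordinal hm); split => //; apply: good_q => //; right.
  exact: q_good q1E.
have hn1 : n = 1%N.
  have : e0 - e1 = (w * n.-1)%N%:Z by rewrite /e0 /e1 PoszM; ring.
  rewrite he0 he1 subr0 => /eqP; rewrite eq_sym eqz_nat muln_eq0 => /orP [|/eqP]; lia.
exists (Ordinal n0); split => //; apply: good_q => //; left.
have e : forall x : K, x ^+ n = x by move=> x; rewrite hn1 expr1.
change (braid n gam alpha beta r i 0 0 0 0 = 1).
by rewrite -[LHS]e q0E he0.
Qed.
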